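(* There is a constant $N>0$ such that for every discriminant $D\in\mathcal{O}_d$ with $|D|>N$ the following holds: if $\epsilon_D=\frac12(t_0+u_0\sqrt{D})$ is a fundamental solution of $t^2-u^2D=4$ and $\epsilon_D^{\,n+1}=\frac12(t_n+u_n\sqrt{D})$ with $t_n,u_n\in\mathcal{O}_d$, then $|t_n|<\frac49|u_n|^2$ for all $n\ge 2$.
   Context: $d\in\{1,2,3,7,11,19,43,67,163\}$ (so $k_d=\mathbb{Q}(\sqrt{-d})$ has class number one), $\mathcal{O}_d$ is the ring of integers of $k_d$. An element $D\in\mathcal{O}_d$ is a discriminant if $D$ is not a perfect square in $\mathcal{O}_d$ and $D\equiv x^2\pmod{4\mathcal{O}_d}$ for some $x\in\mathcal{O}_d$. The square root $\sqrt{D}$ is chosen with argument in $[0,\pi)$. For a solution $(t,u)\in\mathcal{O}_d^2$ of $t^2-u^2D=4$ set $\epsilon_{t,u}=\frac12(t+u\sqrt{D})$. A solution $(t_0,u_0)$ is fundamental if $|\epsilon_{t_0,u_0}|$ is the smallest value larger than $1$ among all $|\epsilon_{t,u}|$; then $\epsilon_D=\epsilon_{t_0,u_0}$. *)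

(* Defs.v *)
From HB Require Import structures.
From mathcomp Require Import all_boot all_order all_algebra.
From mathcomp Require Import all_field.
Set Implicit Arguments. Unset Strict Implicit. Unset Printing Implicit Defensive.
Import Order.TTheory GRing.Theory Num.Theory.
Local Open Scope ring_scope.

Definition class_number_one_d (d : nat) : bool :=
  d \in [:: 1; 2; 3; 7; 11; 19; 43; 67; 163]%N.

Definition in_kd (d : nat) (x : algC) : Prop :=
  exists a b : rat, x = ratr a + ratr b * sqrtC (- (d%:R)).

Definition in_Od (d : nat) (x : algC) : Prop := in_kd d x /\ x \in Aint.

Definition is_discriminant (d : nat) (D : algC) : Prop :=
  [/\ in_Od d D,
      ~ (exists y, in_Od d y /\ D = y ^+ 2) &
      exists x, in_Od d x /\ exists z, in_Od d z /\ D - x ^+ 2 = 4 * z].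

Definition is_principal_sqrt (D s : algC) : Prop :=
  s ^+ 2 = D /\ (0 < 'Im s \/ ('Im s = 0 /\ 0 < 'Re s)).

Definition pell_sol (d : nat) (D t u : algC) : Prop :=
  [/\ in_Od d t, in_Od d u & t ^+ 2 - u ^+ 2 * D = 4].

Definition eps (sD t u : algC) : algC := (t + u * sD) / 2.

Definition fundamental_sol (d : nat) (D sD t0 u0 : algC) : Prop :=
  [/\ pell_sol d D t0 u0, 1 < `|eps sD t0 u0| &
      forall t u, pell_sol d D t u -> 1 < `|eps sD t u| ->
        `|eps sD t0 u0| <= `|eps sD t u| ].

(* Main.v *)
Require Import Defs.
From HB Require Import structures.
From mathcomp Require Import all_boot all_order all_algebra.
From mathcomp Require Import all_field.
From mathcomp Require Import ring lra.
Import Order.TTheory GRing.Theory Num.Theory.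
Local Open Scope ring_scope.

Definition sq (d : nat) : algC := sqrtC (- d%:R).

Lemma sq2 d : sq d ^+ 2 = - d%:R. Proof. exact: sqrtCK. Qed.

Lemma sq_conj d : (0 < d)%N -> (sq d)^* = - sq d.
Proof.
move=> d0; have e : ((sq d)^*)^+2 = - d%:R by rewrite -rmorphXn sq2 rmorphN rmorph_nat.
have : ((sq d)^* - sq d) * ((sq d)^* + sq d) = 0 by ring: e (sq2 d).
move/eqP; rewrite mulf_eq0 => /orP [|]; last by rewrite addr_eq0 => /eqP.
rewrite subr_eq0 => /eqP h.
have : sq d \is Num.real by rewrite CrealE h.
rewrite realEsqr sq2 oppr_ge0 lern0 => /eqP d00.
by rewrite d00 in d0.
Qed.

Lemma kd_conj d a b : (0 < d)%N ->
  (ratr a + ratr b * sq d)^* = ratr a - ratr b * sq d.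
Proof.
move=> d0; have ha := conj_Crat (Crat_rat a); have hb := conj_Crat (Crat_rat b).
by rewrite (rmorphD Num.conj_op) /= ha (rmorphM Num.conj_op) /= hb sq_conj // mulrN.
Qed.

Lemma kd_rat d q : in_kd d (ratr q).
Proof. by exists q, 0; rewrite rmorph0 mul0r addr0. Qed.

Lemma kd_nat d n : in_kd d n%:R.
Proof. by have := kd_rat d n%:R; rewrite rmorph_nat. Qed.

Lemma kd_add d x y : in_kd d x -> in_kd d y -> in_kd d (x + y).
Proof. by move=> [a [b ->]] [c [e ->]]; exists (a + c), (b + e); rewrite !rmorphD; ring. Qed.

Lemma kd_opp d x : in_kd d x -> in_kd d (- x).
Proof. by move=> [a [b ->]]; exists (- a), (- b); rewrite !rmorphN; ring. Qed.

Lemma kd_mul d x y : in_kd d x -> in_kd d y -> in_kd d (x * y).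
Proof.
move=> [a [b ->]] [c [e ->]]; exists (a * c - d%:R * b * e), (a * e + b * c).
rewrite rmorphB rmorphD !rmorphM rmorph_nat /= -/(sq d); ring: (sq2 d).
Qed.

Lemma kd_inv d x : (0 < d)%N -> in_kd d x -> in_kd d x^-1.
Proof.
move=> d0 hx; have [->|xnz] := eqVneq x 0; first by rewrite invr0 -(rmorph0 (ratr : rat -> algC)); exact: kd_rat.
move: hx xnz => [a [b ->]] xnz.
set c : rat := a ^+ 2 + d%:R * b ^+ 2.
have cnz : c != 0.
  apply/eqP; rewrite /c => c0; move/eqP: xnz; apply.
  have d1 : (1 <= d%:R :> rat) by rewrite ler1n.
  have b2 : 0 <= b ^+ 2 by rewrite exprn_even_ge0.
  have a2 : 0 <= a ^+ 2 by rewrite exprn_even_ge0.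
  have a0 : a ^+ 2 = 0 by nra.
  have b0 : b ^+ 2 = 0 by nra.
  move/eqP: a0; rewrite sqrf_eq0 => /eqP a0.
  move/eqP: b0; rewrite sqrf_eq0 => /eqP b0.
  by rewrite a0 b0 !rmorph0 mul0r addr0.
exists (a / c), (- b / c).
have crnz : (ratr c : algC) != 0 by rewrite fmorph_eq0.
have ec : (ratr c : algC) = ratr a ^+ 2 + d%:R * ratr b ^+ 2.
  by rewrite /c rmorphD rmorphM !rmorphXn rmorph_nat.
apply: (mulfI xnz); rewrite mulfV //.
rewrite !fmorph_div rmorphN /= ec -/(sq d).
rewrite ec in crnz.
field: (sq2 d) => //.
Qed.

Lemma kd_div d x y : (0 < d)%N -> in_kd d x -> in_kd d y -> in_kd d (x / y).
Proof. by move=> d0 hx hy; apply: kd_mul => //; apply: kd_inv. Qed.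

Lemma Aint_sq_rat q : q \in Crat -> q ^+ 2 \in Aint -> q \in Aint.
Proof.
move=> qQ q2A.
have q2Z : q ^+ 2 \is a Num.int by apply: Cint_rat_Aint => //; rewrite rpredX.
apply: (@root_monic_Aint ('X^2 - (q ^+ 2)%:P)).
- by rewrite rootE !hornerE subrr.
- exact: monicXnsubC.
- by rewrite polyOverXnsubC.
Qed.

Lemma kd_Aint d y : (0 < d)%N -> in_kd d y -> y ^+ 2 \in Aint -> y \in Aint.
Proof.
move=> d0 [a [b ey]] y2A.
have yc : y^* = ratr a - ratr b * sq d by rewrite ey kd_conj.
set N := y * y^*; set T := y + y^*.
have NQ : N \in Crat.
  have -> : N = ratr (a ^+ 2 + d%:R * b ^+ 2).
    rewrite /N yc ey rmorphD rmorphM !rmorphXn rmorph_nat /= -/(sq d).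
    ring: (sq2 d).
  exact: Crat_rat.
have TQ : T \in Crat.
  have -> : T = ratr (a + a) by rewrite /T yc ey rmorphD /= -/(sq d); ring.
  exact: Crat_rat.
have yc2 : (y^*) ^+ 2 \in Aint by rewrite -rmorphXn Aint_aut.
have NA : N \in Aint by apply: Aint_sq_rat => //; rewrite exprMn rpredM.
have TA : T \in Aint.
  apply: Aint_sq_rat => //.
  have -> : T ^+ 2 = y ^+ 2 + (y^*) ^+ 2 + N + N by rewrite /T /N; ring.
  by rewrite !rpredD.
have NZ : N \is a Num.int by apply: Cint_rat_Aint.
have TZ : T \is a Num.int by apply: Cint_rat_Aint.
have ep : ('X - y%:P) * ('X - (y^*)%:P) = 'X^2 - T%:P * 'X + N%:P.
  by rewrite /T /N polyCD polyCM; ring.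
apply: (@root_monic_Aint (('X - y%:P) * ('X - (y^*)%:P))).
- by rewrite rootM root_XsubC eqxx.
- by rewrite monicMl ?monicXsubC.
- rewrite ep; apply/polyOverP => i.
  rewrite coefD coefB coefCM coefXn coefX coefC.
  apply: rpredD; last by case: ifP => // _; exact: rpred0.
  by apply: rpredB; [exact: rpred_nat | apply: rpredM => //; exact: rpred_nat].
Qed.

Lemma Od_norm_ge1 d u : (0 < d)%N -> in_Od d u -> u != 0 -> 1 <= `|u| ^+ 2.
Proof.
move=> d0 [[a [b eu]] uA] unz.
have uc : u^* = ratr a - ratr b * sq d by rewrite eu kd_conj.
have e2 : `|u| ^+ 2 = u * u^* by rewrite normCK.
have Q : u * u^* \in Crat.
  have -> : u * u^* = ratr (a ^+ 2 + d%:R * b ^+ 2).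
    rewrite uc eu rmorphD rmorphM !rmorphXn rmorph_nat /= -/(sq d).
    ring: (sq2 d).
  exact: Crat_rat.
have A : u * u^* \in Aint by rewrite rpredM // Aint_aut.
have Z : `|u| ^+ 2 \is a Num.int by rewrite e2; apply: Cint_rat_Aint.
have nz : `|u| ^+ 2 != 0 by rewrite sqrf_eq0 normr_eq0.
have := norm_intr_ge1 Z nz.
by rewrite ger0_norm // exprn_ge0.
Qed.

Lemma ineq (F : realFieldType) (r R X A B : F) : 1 < r -> X <= (r+1)^+2 -> 1600 < X -> r^+3 <= R ->
  A <= R + 1 -> (R-1)^+2 <= B * X -> 9 * A < 4 * B.
Proof. move=> h1 h2 h3 h4 h5 h6.
have h7 : X <= 4 * r^+2 by nra.
have h8 : 20 < r by nra.
have h9 : 20 * r^+2 <= R by nra.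
have h10 : 9 * X * (R + 1) < 4 * (R-1)^+2 by nra.
have h11 : 0 < X by lra.
have : 9 * A * X < 4 * B * X by nra.
move=> h; nra.
Qed.

Lemma ineq2 (F : realFieldType) (r w a0 z R W A b : F) :
 1 < r -> 0 <= w -> w <= 1 -> 0 <= a0 -> 1 <= a0^+2 -> 0 <= z -> a0 * z <= r + w ->
 1600 < z^+2 -> r^+3 <= R -> 0 <= W -> W <= 1 -> A <= R + W -> R - W <= b * z -> 0 <= b ->
 9 * A < 4 * b^+2.
Proof.
move=> h1 h2 h3 h4 h5 h6 h7 h8 h9 h10 h11 h12 h13 h14.
have a1 : 1 <= a0 by nra.
have zr : z <= r + 1 by nra.
have X1 : z^+2 <= (r+1)^+2 by nra.
have r3 : 1 <= r^+3 by nra.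
have A1 : A <= R + 1 by lra.
have R1 : R - 1 <= b * z by lra.
have R2 : (R-1)^+2 <= b^+2 * z^+2 by nra.
exact: (@ineq _ _ _ _ _ _ h1 X1 h8 h9 A1 R2).
Qed.

Lemma no_r (F : realFieldType) (r : F) : 1 < r -> r * r <= 1 -> False.
Proof. move=> *; nra. Qed.

Definition nR (x : algC) : algR := in_algR (normr_real x).

Theorem lemma4p5 (d : nat) (hd : class_number_one_d d) :
  exists N : algC, 0 < N /\
  forall D : algC, is_discriminant d D -> N < `|D| ->
  forall sD : algC, is_principal_sqrt D sD ->
  forall t0 u0 : algC, fundamental_sol d D sD t0 u0 ->
  forall (n : nat) (tn un : algC), (2 <= n)%N -> in_Od d tn -> in_Od d un ->
    eps sD t0 u0 ^+ n.+1 = (tn + un * sD) / 2 ->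
    `|tn| < 4 / 9 * `|un| ^+ 2.
Proof.
have d0 : (0 < d)%N by case: d hd.
exists 1600; split; first by rewrite ltr0n.
move=> D [[Dk DA] Dnsq _] XN sD [sD2 _] t0 u0 [[t0O u0O pell] gt1 _] n tn un n2 tnO unO heq.
move: t0O u0O tnO unO => [t0k _] [u0k u0A] [tnk _] [unk _].
have ee : eps sD t0 u0 = (t0 + u0 * sD) / 2 by [].
set e := eps sD t0 u0 in gt1 heq ee *.
set e' := (t0 - u0 * sD) / 2.
have p4 : (t0 + u0 * sD) * (t0 - u0 * sD) = 4 by rewrite -pell -sD2; ring.
have ee' : e * e' = 1 by rewrite ee /e' mulrACA p4; field.
have emd : e - e' = u0 * sD by rewrite ee /e'; field.
have hTU : forall k, exists T U, [/\ in_kd d T, in_kd d U, e ^+ k.+1 = (T + U * sD) / 2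
    & e' ^+ k.+1 = (T - U * sD) / 2].
  elim=> [|k [T [U [Tk Uk h1 h2]]]].
    by exists t0, u0; rewrite !expr1.
  exists ((T * t0 + U * u0 * D) / 2), ((T * u0 + U * t0) / 2); split.
  - by apply: kd_div => //; [apply: kd_add; apply: kd_mul => //; apply: kd_mul | apply: kd_nat].
  - by apply: kd_div => //; [apply: kd_add; apply: kd_mul | apply: kd_nat].
  - by rewrite exprS h1 ee -sD2; field.
  - by rewrite exprS h2 /e' -sD2; field.
have [T [U [Tk Uk h1 h2]]] := hTU n.
have h : (tn + un * sD) / 2 = (T + U * sD) / 2 by rewrite -heq h1.
have e1 : tn - T = (U - un) * sD.
  have : (tn - T) - (U - un) * sD = ((tn + un * sD) / 2 - (T + U * sD) / 2) * 2 by field.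
  by rewrite h subrr mul0r => /eqP; rewrite subr_eq0 => /eqP.
have hU : un = U.
  case: (eqVneq un U) => [//|hne]; exfalso.
  have sk : in_kd d sD.
    have -> : sD = (tn - T) / (U - un) by rewrite e1 [_ * sD]mulrC mulfK // subr_eq0 eq_sym.
    by apply: kd_div => //; apply: kd_add => //; apply: kd_opp.
  have sA : sD \in Aint by apply: (@kd_Aint d sD d0 sk); rewrite sD2.
  by apply: Dnsq; exists sD; split.
have hT : tn = T by move: e1; rewrite hU subrr mul0r => /eqP; rewrite subr_eq0 => /eqP.
set m := n.+1.
have tsum : e ^+ m + e' ^+ m = tn by rewrite h1 h2 hT; field.
have tdiff : e ^+ m - e' ^+ m = un * sD by rewrite h1 h2 hU; field.
have r0 : 0 < `|e| by apply: lt_trans gt1.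
have wr : `|e'| = `|e|^-1.
  apply: (mulIf (lt0r_neq0 r0)); rewrite mulVf ?lt0r_neq0 //.
  by rewrite -normrM mulrC ee' normr1.
have w1 : `|e'| <= 1 by rewrite wr invf_le1 // ltW.
have W1 : `|e' ^+ m| <= 1 by rewrite normrX exprn_ile1.
have R3 : `|e| ^+ 3 <= `|e ^+ m| by rewrite normrX ler_eXn2l.
have u0nz : u0 != 0.
  apply/eqP => u00; apply: (@no_r _ (nR e) gt1).
  have eq : e' = e by rewrite /e' ee u00 !mul0r subr0 addr0.
  have : e * e = 1 by rewrite -{2}eq ee'.
  by move=> h3; have h4 : `|e| * `|e| <= 1 by rewrite -normrM h3 normr1.
have a1 := @Od_norm_ge1 d u0 d0 (conj u0k u0A) u0nz.
have az : `|u0| * `|sD| <= `|e| + `|e'| by rewrite -normrM -emd ler_normB.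
have z2 : 1600 < `|sD| ^+ 2 by rewrite -normrX sD2.
have AR : `|tn| <= `|e ^+ m| + `|e' ^+ m| by rewrite -tsum ler_normD.
have RW : `|e ^+ m| - `|e' ^+ m| <= `|un| * `|sD| by rewrite -normrM -tdiff lerB_dist.
have := @ineq2 _ (nR e) (nR e') (nR u0) (nR sD) (nR (e ^+ m)) (nR (e' ^+ m)) (nR tn) (nR un)
  gt1 (normr_ge0 _) w1 (normr_ge0 _) a1 (normr_ge0 _) az z2 R3 (normr_ge0 _) W1 AR RW (normr_ge0 _).
move=> key.
rewrite mulrAC ltr_pdivlMr ?ltr0n // mulrC.
exact: key.
Qed.
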